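(* Let $\Sigma$ be a finite set with $n$ elements and $\mathcal{R}$ a reflexive symmetric relation on $\Sigma$, and let $\mathcal{G}$ be the simple graph on $\Sigma$ whose edges are the pairs $\{a,b\}$, $a\neq b$, with $(a,b)\in\mathcal{R}$. Then $\mathcal{G}$ is chordal if and only if there exists an enumeration $a_1,\dots,a_n$ of $\Sigma$ such that for all $1\leqslant k<\ell\leqslant n$, either $a_k\in\mathscr{L}(a_\ell)$, or $C_k\cap\mathscr{L}(a_\ell)=\emptyset$, where $C_k$ is the connected component of $a_k$ in the subgraph of $\mathcal{G}$ induced by $\{a_1,\dots,a_k\}$.
   Context: $\mathscr{L}(a)=\{b\in\Sigma:(a,b)\in\mathcal{R}\}$ (so $a\in\mathscr{L}(a)$). A graph is chordal if it has no induced cycle of length $4$ or more. (In the paper, the stated condition on the enumeration is exactly the condition under which the rejection sampling procedures Algorithms 2 and 4 never reject.) *)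

(* Defs.v *)
From mathcomp Require Import all_boot.
Set Implicit Arguments. Unset Strict Implicit. Unset Printing Implicit Defensive.

Definition gedge (T : finType) (R : rel T) : rel T :=
  [rel a b | (a != b) && R a b].

Definition Lset (T : finType) (R : rel T) (a : T) : {set T} := [set b | R a b].

Definition induced_cycle (T : finType) (e : rel T) (m : nat) (f : 'I_m -> T) :=
  injective f /\
  forall i j : 'I_m,
    e (f i) (f j) = (val j == (val i).+1 %% m) || (val i == (val j).+1 %% m).

Definition chordal (T : finType) (e : rel T) :=
  forall (m : nat) (f : 'I_m -> T), 4 <= m -> ~ induced_cycle e f.

Definition induced_rel (T : finType) (e : rel T) (P : {set T}) : rel T :=
  [rel x y | [&& e x y, x \in P & y \in P]].

(* Connected component of x in the subgraph induced by P (assumes x \in P). *)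
Definition component (T : finType) (e : rel T) (P : {set T}) (x : T) : {set T} :=
  [set y | connect (induced_rel e P) x y].

(* Main.v *)
Require Import Defs.
From mathcomp Require Import all_boot.
From mathcomp Require Import zify.
Set Implicit Arguments. Unset Strict Implicit. Unset Printing Implicit Defensive.


Lemma disjP (T : finType) (A B : {pred T}) :
  [disjoint A & B] <-> (forall x, x \in A -> x \in B -> False).
Proof.
rewrite disjoint_subset; split.
- move=> /subsetP H x xA xB. by move: (H x xA); rewrite inE xB.
- move=> H; apply/subsetP => x xA; rewrite inE; apply/negP => xB; exact: H x xA xB.
Qed.

Lemma connect_inv (T : finType) (e : rel T) (a : T -> Prop) x y :
  (forall u v, a u -> e u v -> a v) -> a x -> connect e x y -> a y.
Proof.
move=> H ax /connectP [p pth ->]; elim: p x ax pth => //= z p IH x ax /andP [exz pz].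
exact: IH (H _ _ ax exz) pz.
Qed.

Lemma mod_small_eq a b m : a < m -> b <= m ->
  (a == b %[mod m]) = ((a == b) || ((b == m) && (a == 0))).
Proof.
move=> am bm; rewrite (modn_small am).
case: (ltngtP b m) bm => // [bm _|-> _]; first by rewrite (modn_small bm) orbF.
rewrite modnn; lia.
Qed.

Fixpoint cpath (T : eqType) (e : rel T) (x : T) (p : seq T) : bool :=
  if p is y :: p' then [&& e x y, x \notin p, all (fun z => ~~ e x z) p' & cpath e y p']
  else true.

Lemma cpath_uniq (T : eqType) (e : rel T) x p : cpath e x p -> uniq (x :: p).
Proof.
elim: p x => //= y p IH x /and4P [_ xp _ cp].
by rewrite xp IH.
Qed.

Lemma cpath_adj (T : eqType) (e : rel T) (esym : symmetric e) (eirr : irreflexive e) x p :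
  cpath e x p -> forall x0 i j, i < size (x :: p) -> j < size (x :: p) ->
  e (nth x0 (x :: p) i) (nth x0 (x :: p) j) = (j == i.+1) || (i == j.+1).
Proof.
elim: p x => [|y p IH] x.
  move=> _ x0 [|i] [|j] //= il jl; try lia.
move=> /= /and4P [exy xp allp cp].
move=> x0.
have H0 : forall j, j < (size p).+2 -> e (nth x0 [:: x, y & p] 0) (nth x0 [:: x, y & p] j) = (j == 1).
  move=> [|[|j]] jl; [by rewrite /= eirr|by rewrite /= exy|].
  rewrite /=.
  have jp : nth x0 p j \in p by rewrite mem_nth //; lia.
  by rewrite (negbTE (allP allp _ jp)).
move=> [|i] [|j] il jl.
    by rewrite H0.
  by rewrite H0 //=; lia.
  by rewrite esym H0 //=; lia.
by rewrite /= (IH y cp x0 i j).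
Qed.


Lemma split_last (T : eqType) (a : pred T) p : has a p ->
  exists p1 z p2, [/\ p = p1 ++ z :: p2, a z & ~~ has a p2].
Proof.
elim: p => //= w p IH; case hp: (has a p) => /=.
  have [p1 [z [p2 [-> az np2]]]] := IH hp.
  by exists (w :: p1), z, p2.
by rewrite orbF => aw; exists [::], w, p; rewrite hp.
Qed.

Lemma path_succ (T : eqType) (e : rel T) z p x : path e z p -> x \in p ->
  x != last z p -> exists2 w, w \in p & e x w.
Proof.
elim: p z => //= w p IH z /andP [ezw pw]; rewrite in_cons => /orP [/eqP ->|xp] xl.
  case: p {IH} pw xl => [|w' p] /=; first by move=> _ /negP.
  by move=> /andP [eww' _] _; exists w'; rewrite ?inE ?eqxx ?orbT.
by have [w' w'p xw'] := IH w pw xp xl; exists w'; rewrite // inE w'p orbT.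
Qed.

Lemma mk_cpath (T : eqType) (e : rel T) (eirr : irreflexive e) y :
  forall n x p, size p <= n -> path e x p -> last x p = y -> x != y ->
  exists p', [/\ cpath e x p', last x p' = y & {subset p' <= p}].
Proof.
elim=> [|n IH] x p sp pth lp xy.
  by case: p sp pth lp xy => //= _ _ <- /negP.
have hp : has (e x) p.
  by case: p {sp} pth lp xy => [/= _ -> |w p /= /andP [exw _] _ _]; rewrite ?eqxx ?exw.
have [p1 [z [p2 [pdef exz np2]]]] := split_last hp.
have zp : z \in p by rewrite pdef mem_cat inE eqxx orbT.
have pz : path e z p2 by move: pth; rewrite pdef cat_path /= => /and3P [].
have lz : last z p2 = y by move: lp; rewrite pdef last_cat.
have xz : x != z by apply/eqP => xz; move: exz; rewrite xz eirr.
have xnp2 : x \notin p2.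
  apply/negP => xp2.
  have xl : x != last z p2 by rewrite lz.
  have [w wp2 exw] := path_succ pz xp2 xl.
  by move/hasP: np2; apply; exists w.
case: (eqVneq z y) => [zy|zy].
  exists [:: y]; split => //=; first by rewrite -zy exz inE xz.
  by move=> w; rewrite inE => /eqP ->; rewrite -zy.
have sp2 : size p2 <= n by move: sp; rewrite pdef size_cat /=; lia.
have [p'' [cp lp'' sub]] := IH z p2 sp2 pz lz zy.
exists (z :: p''); split => //=.
  rewrite exz inE negb_or xz /= cp andbT; apply/andP; split.
    by apply/negP => /sub; rewrite (negbTE xnp2).
  apply/allP => w /sub wp2; apply/negP => exw.
  by move/hasP: np2; apply; exists w.
move=> w; rewrite inE => /orP [/eqP -> //|/sub wp2].
by rewrite pdef mem_cat inE wp2 !orbT.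
Qed.

Lemma not_chordal_seq (T : finType) (e : rel T) (c : seq T) x0 : 4 <= size c -> uniq c ->
  (forall i j, i < size c -> j < size c ->
     e (nth x0 c i) (nth x0 c j) = (j == i.+1 %[mod size c]) || (i == j.+1 %[mod size c])) ->
  ~ chordal e.
Proof.
move=> H4 Hu Hadj Hch.
apply: (Hch (size c) (fun i : 'I_(size c) => nth x0 c i) H4); split.
  by move=> i j /eqP; rewrite nth_uniq // => /eqP; apply: val_inj.
move=> i j; rewrite Hadj //.
by rewrite !(modn_small (ltn_ord _)).
Qed.


Definition simplicial (T : finType) (e : rel T) (V : {set T}) (w : T) :=
  forall x y, x \in V -> y \in V -> e w x -> e w y -> x != y -> e x y.

Lemma induced_relE (T : finType) (e : rel T) (P : {set T}) x y :
  induced_rel e P x y = [&& e x y, x \in P & y \in P].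
Proof. by []. Qed.

Lemma induced_sym (T : finType) (e : rel T) (esym : symmetric e) P :
  symmetric (induced_rel e P).
Proof. by move=> x y; rewrite /induced_rel /= esym (andbC (x \in P)). Qed.

Lemma induced_mono (T : finType) (e : rel T) (P Q : {set T}) x y :
  P \subset Q -> connect (induced_rel e P) x y -> connect (induced_rel e Q) x y.
Proof.
move=> /subsetP PQ; apply: connect_sub => u v /= /and3P [euv uP vP].
by apply: connect1; rewrite induced_relE euv !PQ.
Qed.

Lemma path_induced_in (T : finType) (e : rel T) (P : {set T}) x p :
  path (induced_rel e P) x p -> {subset p <= P}.
Proof.
elim: p x => //= w p IH x /andP [/and3P [_ _ wP] pw] z.
by rewrite inE => /orP [/eqP ->|/(IH _ pw)].
Qed.

Lemma dirac (T : finType) (e : rel T) (esym : symmetric e) (eirr : irreflexive e)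
  (Hch : chordal e) :
  forall n (V : {set T}) u, #|V| <= n -> u \in V ->
  (exists y, [/\ y \in V, y != u & ~~ e u y]) ->
  exists w, [/\ w \in V, w != u, ~~ e u w & simplicial e V w].
Proof.
elim=> [|n IH] V u HV uV [y0 [y0V y0u ny0]].
  by move: HV; rewrite leqn0 => /eqP/cards0_eq V0; move: uV; rewrite V0 inE.
pose W := [set z in V | (z != u) && ~~ e u z].
pose D := [set z | connect (induced_rel e W) y0 z].
pose S := [set x in V | e u x && [exists d in D, e x d]].
pose H := D :|: S.
have y0W : y0 \in W by rewrite inE y0V y0u ny0.
have y0D : y0 \in D by rewrite inE connect0.
have Dc : forall d, d \in D -> connect (induced_rel e W) y0 d by move=> d; rewrite inE.
have DW : forall d, d \in D -> d \in W.
  by move=> d /Dc; apply: (connect_inv (a := fun z => z \in W)) => // a b _ /and3P [].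
have WV : forall z, z \in W -> [/\ z \in V, z != u & ~~ e u z].
  by move=> z; rewrite inE => /and3P [].
have HVu : H \subset V :\ u.
  apply/subsetP => z /setUP [zD|zS].
    by have [zV zu _] := WV z (DW z zD); rewrite in_setD1 zu zV.
  move: zS; rewrite inE => /and3P [zV euz _]; rewrite in_setD1 zV andbT.
  by apply/eqP => zu; move: euz; rewrite zu eirr.
have cH : #|H| <= n.
  apply: leq_trans (subset_leq_card HVu) _.
  by move: HV; rewrite (cardsD1 u V) uV add1n ltnS.
have Snbr : forall d z, d \in D -> z \in V -> e d z -> z \in H.
  move=> d z dD zV edz; rewrite in_setU.
  case: (eqVneq z u) => [zu|zu].
    by have [_ _ nud] := WV d (DW d dD); move: nud; rewrite -zu esym edz.
  case euz: (e u z).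
    apply/orP; right; rewrite inE zV euz /=; apply/existsP; exists d.
    by rewrite dD esym edz.
  apply/orP; left; rewrite inE.
  apply: connect_trans (Dc d dD) _; apply: connect1.
  by rewrite induced_relE edz (DW d dD) inE zV zu euz.
have Scl : forall x y, x \in S -> y \in S -> x != y -> e x y.
  move=> x y xS yS xy; apply/negPn/negP => nxy.
  move: xS yS; rewrite !inE.
  move=> /and3P [xV eux /existsP [d1 /andP [d1D exd1]]].
  move=> /and3P [yV euy /existsP [d2 /andP [d2D eyd2]]].
  pose X := [set z | [|| z \in W, z == x | z == y]].
  have WX : W \subset X by apply/subsetP => z zW; rewrite inE zW.
  have xX : x \in X by rewrite inE eqxx orbT.
  have yX : y \in X by rewrite inE eqxx !orbT.
  have cxy : connect (induced_rel e X) x y.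
    have c12 : connect (induced_rel e W) d1 d2.
      apply: connect_trans (_ : connect _ d1 y0) (Dc d2 d2D).
      by rewrite (sym_connect_sym (induced_sym esym W)); apply: Dc.
    apply: connect_trans (_ : connect _ x d1) _.
      by apply: connect1; rewrite induced_relE exd1 xX (subsetP WX _ (DW _ d1D)).
    apply: connect_trans (_ : connect _ d2 y).
      exact: induced_mono WX c12.
    by apply: connect1; rewrite induced_relE esym eyd2 yX (subsetP WX _ (DW _ d2D)).
  have [p pth lp] := connectP cxy.
  have pe : path e x p by apply: sub_path pth => a b /and3P [].
  have pX := path_induced_in pth.
  have [p' [cp lp' sub]] := mk_cpath eirr (leqnn (size p)) pe (sym_equal lp) xy.
  have sq : 2 <= size p'.
    case: p' cp lp' {sub} => [|y' [|y'' p'']] //=.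
      by move=> _ yx; move: xy; rewrite yx eqxx.
    by move=> /andP [exy' _] y'y; move: nxy; rewrite -y'y exy'.
  pose q := x :: p'.
  have uq : uniq q := cpath_uniq cp.
  have uX : u \notin X.
    rewrite inE !negb_or; apply/and3P; split.
    - by rewrite inE eqxx andbF.
    - by apply/eqP => ux; move: eux; rewrite ux eirr.
    - by apply/eqP => uy; move: euy; rewrite uy eirr.
  have uc : u \notin q.
    rewrite inE negb_or; apply/andP; split.
      by apply/eqP => ux; move: eux; rewrite ux eirr.
    by apply/negP => /sub /pX uX'; move: uX; rewrite uX'.
  have lastq : nth u q (size q).-1 = y by rewrite nth_last /= lp'.
  have Eu : forall j, j < size q -> e u (nth u q j) = (j == 0) || (j == (size q).-1).
    move=> j jq; case: (eqVneq j 0) => [->|j0] /=; first by rewrite eux.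
    case: (eqVneq j (size q).-1) => [->|jl]; first by rewrite lastq euy.
    have nq : nth u q j \in q := mem_nth u jq.
    have nx : nth u q j != x.
      by rewrite -[x]/(nth u q 0) nth_uniq //; lia.
    have ny : nth u q j != y.
      rewrite -lastq nth_uniq //; lia.
    have nX : nth u q j \in X.
      by move: nq; rewrite inE (negbTE nx) /= => /sub /pX.
    have nW : nth u q j \in W by move: nX; rewrite inE (negbTE nx) (negbTE ny) !orbF.
    by have [_ _ /negbTE ->] := WV _ nW.
  apply: (not_chordal_seq (c := u :: q) (x0 := u) _ _ _ Hch).
  - by [].
  - by rewrite cons_uniq uc uq.
  move=> [|i] [|j] /= il jl.
  - by rewrite eirr !mod_small_eq.
  - rewrite Eu; last by rewrite /= -ltnS. rewrite !mod_small_eq // /=; clear -jl; lia.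
  - rewrite esym Eu; last by rewrite /= -ltnS. rewrite !mod_small_eq // /=; clear -il; lia.
  - rewrite (cpath_adj esym eirr cp); try by rewrite /= -ltnS. rewrite !mod_small_eq // /=; clear -il jl; lia.
have Hsimp : forall w, w \in D -> simplicial e H w -> simplicial e V w.
  move=> w wD sH x y xV yV ewx ewy xy.
  by apply: sH => //; [exact: (Snbr w x wD xV ewx) | exact: (Snbr w y wD yV ewy)].
suff [w [wD sw]] : exists w, w \in D /\ simplicial e H w.
  by have [wV wu nuw] := WV w (DW w wD); exists w; split => //; exact: Hsimp.
have HD : forall z, z \in H -> z \notin S -> z \in D.
  by move=> z /setUP [] // ->.
case: (boolP [exists x in S, exists y in H, (y != x) && ~~ e x y]).
  move=> /existsP [x /andP [xS /existsP [y /and3P [yH yx nxy]]]].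
  have xH : x \in H by rewrite in_setU xS orbT.
  have [w [wH wx nxw sw]] := IH H x cH xH (ex_intro _ y (And3 yH yx nxy)).
  exists w; split => //; apply: HD wH _; apply/negP => wS.
  by move: nxw; rewrite Scl // eq_sym.
move=> nE1.
have A1 : forall x y, x \in S -> y \in H -> y != x -> e x y.
  move=> x y xS yH yx; apply/negPn/negP => nxy; move/negP: nE1; apply.
  by apply/existsP; exists x; rewrite xS /=; apply/existsP; exists y; rewrite yH yx nxy.
case: (boolP [exists x in D, exists y in H, (y != x) && ~~ e x y]).
  move=> /existsP [x /andP [xD /existsP [y /and3P [yH yx nxy]]]].
  have xH : x \in H by rewrite in_setU xD.
  have [w [wH wx nxw sw]] := IH H x cH xH (ex_intro _ y (And3 yH yx nxy)).
  exists w; split => //; apply: HD wH _; apply/negP => wS.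
  by move: nxw; rewrite esym A1 // eq_sym.
move=> nE2.
have A2 : forall x y, x \in D -> y \in H -> y != x -> e x y.
  move=> x y xD yH yx; apply/negPn/negP => nxy; move/negP: nE2; apply.
  by apply/existsP; exists x; rewrite xD /=; apply/existsP; exists y; rewrite yH yx nxy.
exists y0; split => // x y xH yH _ _ xy.
by case/setUP: (xH) => [xD|xS]; [apply: A2|apply: A1]; rewrite // eq_sym.
Qed.

Lemma simplicial_exists (T : finType) (e : rel T) (esym : symmetric e)
  (eirr : irreflexive e) (Hch : chordal e) (V : {set T}) v :
  v \in V -> exists2 w, w \in V & simplicial e V w.
Proof.
move=> vV.
case: (boolP [exists x in V, exists y in V, (y != x) && ~~ e x y]).
  move=> /existsP [x /andP [xV /existsP [y /and3P [yV yx nxy]]]].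
  have [w [wV _ _ sw]] := dirac esym eirr Hch (leqnn #|V|) xV (ex_intro _ y (And3 yV yx nxy)).
  by exists w.
move=> nE; exists v => // x y xV yV _ _ xy; apply/negPn/negP => nxy.
move/negP: nE; apply; apply/existsP; exists x; rewrite xV /=; apply/existsP; exists y.
by rewrite yV eq_sym xy nxy.
Qed.


Lemma compE (T : finType) (e : rel T) (P : {set T}) b c :
  (c \in component e P b) = connect (induced_rel e P) b c.
Proof. by rewrite inE. Qed.

Lemma comp_in (T : finType) (e : rel T) (P : {set T}) b c :
  b \in P -> c \in component e P b -> c \in P.
Proof.
move=> bP; rewrite compE; apply: (connect_inv (a := fun z => z \in P)) => //.
by move=> u v _; rewrite induced_relE => /and3P [].
Qed.

Lemma comp_ext (T : finType) (e : rel T) (esym : symmetric e) (eirr : irreflexive e)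
  (V : {set T}) v (P : {set T}) b :
  simplicial e V v -> P \subset V -> b \in P ->
  forall c, c \in component e (v |: P) b ->
  c \in component e P b \/ (c = v /\ exists2 c', c' \in component e P b & e v c').
Proof.
move=> sv /subsetP PV bP c; rewrite compE.
apply: (connect_inv (a := fun c => c \in component e P b \/
   (c = v /\ exists2 c', c' \in component e P b & e v c'))).
  move=> u z [uC|[-> [c' c'C evc']]]; rewrite induced_relE => /and3P [euz _ zP].
    have uP := comp_in bP uC.
    case/setU1P: zP => [zv|zP]; first by subst z; right; split => //; exists u => //; rewrite esym.
    left; rewrite compE; apply: connect_trans (_ : connect _ b u) _; first by rewrite -compE.
    by apply: connect1; rewrite induced_relE euz uP zP.
  have zv : z != v by apply/eqP => zv; move: euz; rewrite zv eirr.
  case/setU1P: zP => [zv'|zP]; first by move: zv; rewrite zv' eqxx.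
  have c'P := comp_in bP c'C.
  case: (eqVneq z c') => [->|zc']; first by left.
  have ec'z : e c' z by rewrite esym; apply: sv => //; rewrite ?PV.
  left; rewrite compE; apply: connect_trans (_ : connect _ b c') _; first by rewrite -compE.
  by apply: connect1; rewrite induced_relE ec'z c'P zP.
by left; rewrite compE connect0.
Qed.

Definition good (T : finType) (R : rel T) (s : seq T) :=
  forall (x0 : T) (k l : nat), k < l < size s ->
    nth x0 s k \in Lset R (nth x0 s l) \/
    [disjoint component (gedge R) [set x in take k.+1 s] (nth x0 s k)
       & Lset R (nth x0 s l)].

Lemma gedge_sym (T : finType) (R : rel T) : symmetric R -> symmetric (gedge R).
Proof. by move=> Rsym x y; rewrite /gedge /= eq_sym Rsym. Qed.

Lemma gedge_irr (T : finType) (R : rel T) : irreflexive (gedge R).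
Proof. by move=> x; rewrite /gedge /= eqxx. Qed.

Lemma order_exists (T : finType) (R : rel T) (Rsym : symmetric R)
  (Hch : chordal (gedge R)) :
  forall n (V : {set T}), #|V| <= n -> exists s, [/\ uniq s, s =i V & good R s].
Proof.
have esym := gedge_sym Rsym; have eirr := @gedge_irr T R.
elim=> [|n IH] V HV.
  exists [::]; split => //.
    by move=> x; move: HV; rewrite leqn0 => /eqP/cards0_eq ->; rewrite inE.
  by move=> x0 k l /andP [_].
case: (set_0Vmem V) => [V0|[v vV]].
  exists [::]; split => //; first by move=> x; rewrite V0 inE.
  by move=> x0 k l /andP [_].
have [v' v'V sv] := simplicial_exists esym eirr Hch vV.
have cV : #|V :\ v'| <= n by move: HV; rewrite (cardsD1 v' V) v'V add1n ltnS.
have [s' [us' s'V gs']] := IH _ cV.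
have vs' : v' \notin s' by rewrite s'V in_setD1 eqxx.
exists (v' :: s'); split.
- by rewrite cons_uniq vs' us'.
- by move=> x; rewrite inE s'V in_setD1; case: (eqVneq x v') => [->|].
move=> x0 [|k] [|l] //=; first (move=> ll).
  set w := nth x0 s' l.
  case Rwv: (R w v'); first by left; rewrite inE.
  right; apply/disjP => c; rewrite compE => cc.
  have cv : c = v'.
    apply/eqP; move: cc; apply: (connect_inv (a := fun z => z == v')) => //.
    by move=> a b0 _; rewrite induced_relE => /and3P [_ _]; rewrite inE take0 inE.
  by rewrite inE cv Rwv.
move=> kl'; have /andP [kl ll] := kl'; rewrite !ltnS in kl ll.
have ks : k < size s' := ltn_trans kl ll.
set w := nth x0 s' l; set b := nth x0 s' k.
case Rwb: (R w b); first by left; rewrite inE.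
right.
have [H1|H1] := gs' x0 k l kl'; first by move: H1; rewrite -/w -/b inE Rwb.
apply/disjP => c cC cL.
have Pdef : [set x in v' :: take k.+1 s'] = v' |: [set x in take k.+1 s'].
  by apply/setP => x; rewrite !inE.
have PV : [set x in take k.+1 s'] \subset V.
  by apply/subsetP => x; rewrite inE => /mem_take; rewrite s'V in_setD1 => /andP [].
have bs' : b \in s' by rewrite mem_nth.
have ws' : w \in s' by rewrite mem_nth.
have bP : b \in [set x in take k.+1 s'].
  by rewrite inE in_take // /b index_uniq.
have wP : w \notin [set x in take k.+1 s'].
  by rewrite inE in_take // /w index_uniq // ltnS -ltnNge.
move: cC; rewrite Pdef => /(comp_ext esym eirr sv PV bP) [cC'|[cv [c' c'C evc']]].
  by rewrite (disjointFr H1 cC') in cL.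
have wV : w \in V by move: ws'; rewrite s'V in_setD1 => /andP [].
have c'P := comp_in bP c'C.
have evw : gedge R v' w.
  rewrite /gedge /= Rsym; move: cL; rewrite cv inE => ->; rewrite andbT.
  by apply/eqP => vw; move: vs'; rewrite vw ws'.
have wc' : w != c' by apply/eqP => wc'; move: wP; rewrite wc' c'P.
have ewc' : gedge R w c' by apply: sv => //; apply: (subsetP PV).
move: (disjointFr H1 c'C); rewrite inE.
by move: ewc'; rewrite /gedge /= => /andP [_ ->].
Qed.


Lemma exmax (F : nat -> nat) lo hi : lo <= hi ->
  exists t, [/\ lo <= t, t <= hi & forall t', lo <= t' -> t' <= hi -> F t' <= F t].
Proof.
elim: hi => [|hi IH] lh.
  by exists 0; split => // t' l1 l2; have -> : t' = 0 by lia.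
case: (eqVneq lo hi.+1) => [->|ne].
  by exists hi.+1; split => // t' l1 l2; have -> : t' = hi.+1 by lia.
have [t [l1 l2 Ht]] := IH (ltac:(lia)).
case: (leqP (F hi.+1) (F t)) => cmp.
  exists t; split => // [|t' a b]; first lia.
  case: (eqVneq t' hi.+1) => [->//|tne]; apply: Ht => //; lia.
exists hi.+1; split => // t' a b.
case: (eqVneq t' hi.+1) => [->//|tne].
apply: leq_trans (Ht t' a _) (ltnW cmp); lia.
Qed.


Lemma partA_core (T : finType) (R : rel T) (Rsym : symmetric R) (s : seq T) (m : nat) (G : nat -> T)
  (sall : forall x, x \in s) (us : uniq s)
  (hgood : forall u w c, index u s < index w s ->
     c \in component (gedge R) [set x in take (index u s).+1 s] u -> R w c -> R w u)
  (Gadj : forall t u, gedge R (G t) (G u) = (u == t.+1 %[mod m]) || (t == u.+1 %[mod m]))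
  (Ginj : forall t u, t < m -> u < m -> G t = G u -> t = u)
  (Gmax : forall t, t < m -> index (G t) s <= index (G 0) s) :
  4 <= m -> False.
Proof.
move=> m4.
pose idx x := index x s.
have idx_inj : forall x y, idx x = idx y -> x = y.
  by move=> x y ixy; rewrite -(nth_index x (sall x)) -/(idx x) ixy nth_index.
have conn : forall (P : {set T}) lo d, (forall t, lo <= t <= lo + d -> G t \in P) ->
    connect (induced_rel (gedge R) P) (G lo) (G (lo + d)).
  move=> P lo; elim=> [|d IH] HP; first by rewrite addn0 connect0.
  apply: connect_trans (IH _) _; first by move=> t /andP [a b]; apply: HP; lia.
  apply: connect1; rewrite induced_relE Gadj addnS eqxx /= !HP //; lia.
have touch : forall lo hi tz w t1, lo <= tz <= hi ->
    (forall t, lo <= t -> t <= hi -> idx (G t) <= idx (G tz)) ->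
    idx (G tz) < idx w -> lo <= t1 <= hi -> gedge R w (G t1) -> gedge R w (G tz).
  move=> lo hi tz w t1 /andP [l1 l2] Hmax iw /andP [t1a t1b] ew1.
  have PG : forall t, lo <= t <= hi ->
      G t \in [set x in take (index (G tz) s).+1 s].
    by move=> t /andP [a b]; rewrite inE in_take // ltnS; apply: Hmax.
  set P := [set x in take (index (G tz) s).+1 s].
  set E := induced_rel (gedge R) P.
  have c1 : connect E (G lo) (G tz).
    have H := conn P lo (tz - lo); rewrite subnKC in H => //.
    by apply: H => t Ht; apply: PG; lia.
  have c2 : connect E (G lo) (G t1).
    have H := conn P lo (t1 - lo); rewrite subnKC in H => //.
    by apply: H => t Ht; apply: PG; lia.
  have cc : G t1 \in component (gedge R) P (G tz).
    rewrite compE; apply: connect_trans _ c2.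
    by rewrite (sym_connect_sym (induced_sym (gedge_sym Rsym) _)).
  have Rw1 : R w (G t1) by move: ew1; rewrite /gedge /= => /andP [].
  have := hgood (G tz) w (G t1) iw cc Rw1.
  rewrite /gedge /= => ->; rewrite andbT.
  by apply/eqP => wz; move: iw; rewrite wz ltnn.
have ltidx : forall a b, a < m -> b < m -> a != b -> idx (G a) <= idx (G b) ->
    idx (G a) < idx (G b).
  move=> a b am bm ab; rewrite leq_eqVlt => /orP [/eqP H|//].
  by move: ab; rewrite (Ginj a b am bm (idx_inj _ _ H)) eqxx.
have [j [j1 j2 Hj]] := exmax (fun t => idx (G t)) (ltac:(lia) : 1 <= m.-1).
have j0 : idx (G j) < idx (G 0).
  by apply: ltidx; try lia; apply: Gmax; lia.
have e01 : gedge R (G 0) (G 1) by rewrite Gadj !mod_small_eq; lia.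
have e0j := touch 1 m.-1 j (G 0) 1 (ltac:(lia)) Hj j0 (ltac:(lia)) e01.
rewrite Gadj !mod_small_eq in e0j; try lia.
have [jE|jE] : j = 1 \/ j = m.-1 by lia.
  subst j.
  have [k [k1 k2 Hk]] := exmax (fun t => idx (G t)) (ltac:(lia) : 2 <= m.-1).
  have k0 : idx (G k) < idx (G 0).
    by apply: ltidx; try lia; apply: Gmax; lia.
  have e0m : gedge R (G 0) (G m.-1) by rewrite Gadj !mod_small_eq; lia.
  have e0k := touch 2 m.-1 k (G 0) m.-1 (ltac:(lia)) Hk k0 (ltac:(lia)) e0m.
  rewrite Gadj !mod_small_eq in e0k; try lia.
  have kE : k = m.-1 by lia.
  have k1' : idx (G k) < idx (G 1).
    by apply: ltidx; try lia; apply: Hj; lia.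
  have e12 : gedge R (G 1) (G 2) by rewrite Gadj !mod_small_eq; lia.
  have e1k := touch 2 m.-1 k (G 1) 2 (ltac:(lia)) Hk k1' (ltac:(lia)) e12.
  rewrite Gadj !mod_small_eq in e1k; lia.
subst j.
have [k [k1 k2 Hk]] := exmax (fun t => idx (G t)) (ltac:(lia) : 1 <= m.-2).
have k0 : idx (G k) < idx (G 0).
  by apply: ltidx; try lia; apply: Gmax; lia.
have e0k := touch 1 m.-2 k (G 0) 1 (ltac:(lia)) Hk k0 (ltac:(lia)) e01.
rewrite Gadj !mod_small_eq in e0k; try lia.
have kE : k = 1 by lia.
have kj : idx (G k) < idx (G m.-1).
  by apply: ltidx; try lia; apply: Hj; lia.
have ejm : gedge R (G m.-1) (G m.-2) by rewrite Gadj !mod_small_eq; lia.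
have ejk := touch 1 m.-2 k (G m.-1) m.-2 (ltac:(lia)) Hk kj (ltac:(lia)) ejm.
rewrite Gadj !mod_small_eq in ejk; lia.
Qed.


Lemma modS_mod a m : (a %% m).+1 %% m = a.+1 %% m.
Proof. by rewrite -addn1 modnDml addn1. Qed.

Theorem proposition3p1 (Sigma : finType) (R : rel Sigma)
  (Rrefl : reflexive R) (Rsym : symmetric R) :
  chordal (gedge R) <->
  exists s : seq Sigma,
    [/\ uniq s, size s = #|Sigma| &
      forall (x0 : Sigma) (k l : nat), k < l < size s ->
        nth x0 s k \in Lset R (nth x0 s l) \/
        [disjoint component (gedge R) [set x in take k.+1 s] (nth x0 s k)
           & Lset R (nth x0 s l)]].
Proof.
split.
  move=> Hch.
  have [s [us sT gs]] := order_exists Rsym Hch (leqnn #|[set: Sigma]|).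
  exists s; split => //.
  by rewrite -(card_uniqP us) (eq_card sT) cardsT.
move=> [s [us ss hg]] m f m4 [finj fadj].
have sall : forall x, x \in s.
  move=> x; apply/negPn/negP => xs.
  have := cardC (mem s); rewrite (card_uniqP us) ss => /eqP.
  rewrite -{2}[#|Sigma|]addn0 eqn_add2l => /eqP /card0_eq /(_ x).
  by rewrite !inE xs.
have hgood : forall u w c, index u s < index w s ->
    c \in component (gedge R) [set x in take (index u s).+1 s] u -> R w c -> R w u.
  move=> u w c iuw cc Rwc.
  have ws : index w s < size s by rewrite index_mem.
  have [H|H] := hg u (index u s) (index w s) (ltac:(by rewrite iuw ws)).
    by move: H; rewrite !nth_index // inE.
  by move: H; rewrite !nth_index // => H; move: (disjointFr H cc); rewrite inE Rwc.
have m0 : 0 < m by lia.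
pose Fm t := f (Ordinal (ltn_pmod t m0)).
have [i0 [_ i0m Hi0]] := exmax (fun t => index (Fm t) s) (leq0n m.-1).
pose G t := Fm (i0 + t).
have Fmod : forall t, Fm t = Fm (t %% m).
  by move=> t; rewrite /Fm; congr f; apply: val_inj; rewrite /= modn_mod.
apply: (@partA_core _ R Rsym s m G sall us hgood) => //.
- move=> t u; rewrite /G /Fm fadj /= !modS_mod -!addnS.
  by rewrite !eqn_modDl.
- move=> t u tm um; rewrite /G /Fm => /finj /(congr1 val) /= /eqP.
  by rewrite eqn_modDl !modn_small // => /eqP.
- move=> t tm; rewrite /G addn0 Fmod; apply: Hi0 => //.
  by have := ltn_pmod (i0 + t) m0; lia.
Qed.
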